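(* Let $G$ be a finitely generated nilpotent group and $\Phi$ a uniformly continuous action of $G$ on a metric space $\Omega$; let $U,V\subset\Omega$. Assume there exists $g\in G$ such that the homeomorphism $f_g=\Phi(g,\cdot)$ is topologically Anosov with respect to $(U,V)$. Then the action $\Phi$ is topologically Anosov with respect to $(U,V)$.
   Context: Let $(\Omega,\mathrm{dist})$ be a metric space; $B(\delta,x)=\{y:\mathrm{dist}(x,y)<\delta\}$ and $B(\delta,U)=\bigcup_{x\in U}B(\delta,x)$. An action of a group $G$ is a map $\Phi:G\times\Omega\to\Omega$ such that each $f_g=\Phi(g,\cdot)$ is a homeomorphism of $\Omega$, $\Phi(e,x)=x$, and $\Phi(g_1g_2,x)=\Phi(g_1,\Phi(g_2,x))$. For a finitely generated $G$, the action is uniformly continuous if for some finite symmetric generating set $S$ (symmetric: $s\in S\Rightarrow s^{-1}\in S$) all maps $f_s$, $s\in S$, are uniformly continuous. Fix a finite symmetric generating set $S$ of $G$. For $d>0$, a family $\{y_g\}_{g\in G}\subset\Omega$ is a $d$-pseudotrajectory if $\mathrm{dist}(y_{sg},f_s(y_g))<d$ for all $s\in S$, $g\in G$. A uniformly continuous action has the shadowing property on $V\subset\Omega$ if for every $\varepsilon>0$ there is $d>0$ such that for every $d$-pseudotrajectory $\{y_g\}$ with all $y_g\in V$ there is $x_e\in\Omega$ with $\mathrm{dist}(y_g,f_g(x_e))<\varepsilon$ for all $g\in G$ (this property does not depend on the choice of $S$). The action is expansive on $U\subset\Omega$ if there is $\Delta>0$ such that whenever $x_1,x_2\in U$ satisfy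 $\Phi(g,x_1),\Phi(g,x_2)\in U$ and $\mathrm{dist}(\Phi(g,x_1),\Phi(g,x_2))<\Delta$ for all $g\in G$, then $x_1=x_2$. The action is topologically Anosov with respect to $(U,V)$ if (TA1) there is $\gamma>0$ with $B(\gamma,V)\subset U$, (TA2) it has the shadowing property on $V$, and (TA3) it is expansive on $U$. A homeomorphism $f$ of $\Omega$ is said to have any of these properties if the $\mathbb Z$-action $(k,x)\mapsto f^k(x)$ (with generating set $\{1,-1\}$) has it. A group $G$ is nilpotent of class $n$ if its lower central series $G_1=G$, $G_{i+1}=[G_i,G]$ satisfies $G_{n+1}=\{e\}$ and $G_n\neq\{e\}$; here $[g,h]=ghg^{-1}h^{-1}$. *)

(* Defs.v *)
From Stdlib Require Import Reals List ZArith Lia.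
Import ListNotations.
Set Implicit Arguments.
Open Scope R_scope.

Record Group := {
  carrier :> Type;
  gmul : carrier -> carrier -> carrier;
  gone : carrier;
  ginv : carrier -> carrier;
  gmul_assoc : forall a b c, gmul a (gmul b c) = gmul (gmul a b) c;
  gmul_1l : forall a, gmul gone a = a;
  gmul_1r : forall a, gmul a gone = a;
  gmul_Vl : forall a, gmul (ginv a) a = gone;
  gmul_Vr : forall a, gmul a (ginv a) = gone }.

Arguments gmul {g}.
Arguments gone {g}.
Arguments ginv {g}.

Section GroupDefs.
Variable G : Group.

Definition comm (g h : G) : G := gmul (gmul (gmul g h) (ginv g)) (ginv h).

Inductive gen_sub (A : G -> Prop) : G -> Prop :=
| gs_in : forall x, A x -> gen_sub A x
| gs_one : gen_sub A gone
| gs_mul : forall x y, gen_sub A x -> gen_sub A y -> gen_sub A (gmul x y)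
| gs_inv : forall x, gen_sub A x -> gen_sub A (ginv x).

(** lower central series, shifted: lcs n = G_{n+1}
    (lcs 0 = G_1 = G, lcs (n+1) = [lcs n, G]) *)
Fixpoint lcs (n : nat) : G -> Prop :=
  match n with
  | O => fun _ => True
  | S m => gen_sub (fun c => exists a b, lcs m a /\ c = comm a b)
  end.

Definition nilpotent : Prop := exists n, forall x, lcs n x -> x = gone.

Definition symmetric_set (S : list G) : Prop :=
  forall s, In s S -> In (ginv s) S.

Definition generates (S : list G) : Prop :=
  forall g, gen_sub (fun x => In x S) g.

Definition finitely_generated : Prop := exists S : list G, generates S.

Definition npow (g : G) (n : nat) : G := Nat.iter n (gmul g) gone.
Definition gpow (g : G) (k : Z) : G :=
  match k with
  | Z0 => gone
  | Zpos p => npow g (Pos.to_nat p)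
  | Zneg p => ginv (npow g (Pos.to_nat p))
  end.
End GroupDefs.

Definition Zgroup : Group.
Proof.
  refine (@Build_Group Z Z.add 0%Z Z.opp _ _ _ _ _); intros; lia.
Defined.

Section MetricDefs.
Variable Omega : Type.
Variable dist : Omega -> Omega -> R.

Definition is_metric : Prop :=
  (forall x y, 0 <= dist x y) /\
  (forall x y, dist x y = 0 <-> x = y) /\
  (forall x y, dist x y = dist y x) /\
  (forall x y z, dist x z <= dist x y + dist y z).

Definition continuous_map (f : Omega -> Omega) : Prop :=
  forall x eps, 0 < eps -> exists delta, 0 < delta /\
    forall y, dist x y < delta -> dist (f x) (f y) < eps.

Definition unif_continuous (f : Omega -> Omega) : Prop :=
  forall eps, 0 < eps -> exists delta, 0 < delta /\
    forall x y, dist x y < delta -> dist (f x) (f y) < eps.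

Definition is_homeo (f : Omega -> Omega) : Prop :=
  exists h : Omega -> Omega,
    (forall x, h (f x) = x) /\ (forall x, f (h x) = x) /\
    continuous_map f /\ continuous_map h.

Variable G : Group.

Definition is_action (Phi : G -> Omega -> Omega) : Prop :=
  (forall g, is_homeo (Phi g)) /\
  (forall x, Phi gone x = x) /\
  (forall g1 g2 x, Phi (gmul g1 g2) x = Phi g1 (Phi g2 x)).

Definition unif_continuous_action (Phi : G -> Omega -> Omega) : Prop :=
  exists S : list G, @symmetric_set G S /\ @generates G S /\
    forall s, In s S -> unif_continuous (Phi s).

Definition pseudotrajectory (S : list G) (Phi : G -> Omega -> Omega)
  (d : R) (y : G -> Omega) : Prop :=
  forall s g, In s S -> dist (y (gmul s g)) (Phi s (y g)) < d.

Definition shadowing_on (S : list G) (Phi : G -> Omega -> Omega)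
  (V : Omega -> Prop) : Prop :=
  forall eps, 0 < eps -> exists d, 0 < d /\
    forall y : G -> Omega, pseudotrajectory S Phi d y ->
      (forall g, V (y g)) ->
      exists xe, forall g, dist (y g) (Phi g xe) < eps.

Definition expansive_on (Phi : G -> Omega -> Omega) (U : Omega -> Prop) : Prop :=
  exists Delta, 0 < Delta /\
    forall x1 x2, U x1 -> U x2 ->
      (forall g, U (Phi g x1) /\ U (Phi g x2) /\
                 dist (Phi g x1) (Phi g x2) < Delta) ->
      x1 = x2.

Definition ball_subset (gamma : R) (V U : Omega -> Prop) : Prop :=
  forall x y, V x -> dist x y < gamma -> U y.

Definition topologically_Anosov (S : list G) (Phi : G -> Omega -> Omega)
  (U V : Omega -> Prop) : Prop :=
  (exists gamma, 0 < gamma /\ ball_subset gamma V U) /\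
  shadowing_on S Phi V /\
  expansive_on Phi U.
End MetricDefs.

(** The homeomorphism f_g = Phi(g, .) is topologically Anosov: the Z-action
    k |-> f_g^k = Phi(g^k, .) with generating set {1,-1} is. *)
Definition homeo_topologically_Anosov (Omega : Type) (dist : Omega -> Omega -> R)
  (G : Group) (Phi : G -> Omega -> Omega) (g : G) (U V : Omega -> Prop) : Prop :=
  @topologically_Anosov Omega dist Zgroup [1%Z; (-1)%Z]
    (fun (k : Zgroup) x => Phi (@gpow G g k) x) U V.

(* Main.v *)
Require Import Defs.
From Stdlib Require Import Reals List ZArith Lia Lra ClassicalEpsilon.
Import ListNotations.
Open Scope R_scope.

Lemma g_cancel_l (G : Group) (a b : G) : gmul (ginv a) (gmul a b) = b.
Proof. rewrite gmul_assoc, gmul_Vl, gmul_1l. reflexivity. Qed.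
Lemma g_cancel_r (G : Group) (a b : G) : gmul a (gmul (ginv a) b) = b.
Proof. rewrite gmul_assoc, gmul_Vr, gmul_1l. reflexivity. Qed.
Lemma g_inv_uniq (G : Group) (a b : G) : gmul a b = gone -> b = ginv a.
Proof. intro H. rewrite <- (g_cancel_l G a b), H, gmul_1r. reflexivity. Qed.
Lemma g_inv_mul (G : Group) (a b : G) : ginv (gmul a b) = gmul (ginv b) (ginv a).
Proof. symmetry. apply g_inv_uniq. rewrite <- !gmul_assoc, g_cancel_r, gmul_Vr. reflexivity. Qed.
Lemma g_inv_one (G : Group) : ginv (@gone G) = gone.
Proof. symmetry. apply g_inv_uniq. apply gmul_1l. Qed.
Lemma g_inv_inv (G : Group) (a : G) : ginv (ginv a) = a.
Proof. symmetry. apply g_inv_uniq. apply gmul_Vl. Qed.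

Lemma npow_comm (G : Group) (g : G) n : gmul (npow G g n) g = gmul g (npow G g n).
Proof.
  induction n; simpl. rewrite gmul_1l, gmul_1r; reflexivity.
  rewrite <- gmul_assoc. rewrite IHn. reflexivity.
Qed.

Lemma gpow_succ (G : Group) (g : G) k : gpow G g (Z.succ k) = gmul g (gpow G g k).
Proof.
  destruct k as [|p|p]; simpl.
  - reflexivity.
  - rewrite Pos.add_1_r, Pos2Nat.inj_succ. reflexivity.
  - destruct (Pos.succ_pred_or p) as [->|Hp].
    + simpl. rewrite gmul_1r, gmul_Vr. reflexivity.
    + rewrite <- Hp. set (q := Pos.pred p).
      change (Z.pos_sub 1 (Pos.succ q)) with (Z.pos 1 + Z.neg (Pos.succ q))%Z.
      replace (Z.pos 1 + Z.neg (Pos.succ q))%Z with (Z.neg q) by lia.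
      simpl. rewrite Pos2Nat.inj_succ. simpl.
      rewrite <- npow_comm, g_inv_mul, g_cancel_r.
      reflexivity.
Qed.

Lemma gpow_pred (G : Group) (g : G) k : gpow G g (Z.pred k) = gmul (ginv g) (gpow G g k).
Proof.
  rewrite <- (Z.succ_pred k) at 2. rewrite gpow_succ, g_cancel_l. reflexivity.
Qed.

Lemma gpow_comm (G : Group) (g : G) k : gmul (gpow G g k) g = gmul g (gpow G g k).
Proof.
  induction k using Z.peano_ind.
  - simpl. rewrite gmul_1l, gmul_1r; reflexivity.
  - rewrite gpow_succ, <- gmul_assoc, IHk. reflexivity.
  - rewrite gpow_pred. rewrite g_cancel_r. rewrite <- gmul_assoc, IHk, g_cancel_l. reflexivity.
Qed.

Definition Equiv (G : Group) (Omega : Type) (Phi : G -> Omega -> Omega)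
  (F : G -> Omega) (a : G) : Prop := forall h, F (gmul a h) = Phi a (F h).

Lemma act_inv_l (G : Group) (Omega : Type) dist (Phi : G -> Omega -> Omega) :
  @is_action Omega dist G Phi -> forall a x, Phi (ginv a) (Phi a x) = x.
Proof. intros [_ [H1 H2]] a x. rewrite <- H2, gmul_Vl, H1. reflexivity. Qed.

Lemma equiv_one G Omega dist Phi F : @is_action Omega dist G Phi -> Equiv G Omega Phi F gone.
Proof. intros [_ [H1 H2]] h. rewrite gmul_1l, H1. reflexivity. Qed.

Lemma equiv_mul G Omega dist Phi F a b : @is_action Omega dist G Phi ->
  Equiv G Omega Phi F a -> Equiv G Omega Phi F b -> Equiv G Omega Phi F (gmul a b).
Proof. intros [_ [H1 H2]] Ha Hb h. rewrite <- gmul_assoc, Ha, Hb, H2. reflexivity. Qed.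

Lemma equiv_inv G Omega dist Phi F a : @is_action Omega dist G Phi ->
  Equiv G Omega Phi F a -> Equiv G Omega Phi F (ginv a).
Proof.
  intros HA Ha h. rewrite <- (g_cancel_r G a h) at 2. rewrite Ha.
  rewrite (act_inv_l G Omega dist Phi HA). reflexivity.
Qed.

Lemma equiv_npow G Omega dist Phi F a n : @is_action Omega dist G Phi ->
  Equiv G Omega Phi F a -> Equiv G Omega Phi F (npow G a n).
Proof.
  intros HA Ha. induction n; simpl. apply (equiv_one G Omega dist); auto.
  apply (equiv_mul G Omega dist); auto.
Qed.

Lemma equiv_gpow G Omega dist Phi F a k : @is_action Omega dist G Phi ->
  Equiv G Omega Phi F a -> Equiv G Omega Phi F (gpow G a k).
Proof.
  intros HA Ha. destruct k; simpl. apply (equiv_one G Omega dist); auto.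
  apply (equiv_npow G Omega dist); auto.
  apply (equiv_inv G Omega dist); auto. apply (equiv_npow G Omega dist); auto.
Qed.

Lemma equiv_gen (G : Group) Omega dist Phi F (P : G -> Prop) x : @is_action Omega dist G Phi ->
  (forall s, P s -> Equiv G Omega Phi F s) -> gen_sub G P x -> Equiv G Omega Phi F x.
Proof.
  intros HA HP Hx. induction Hx.
  - auto.
  - apply (equiv_one G Omega dist); auto.
  - apply (equiv_mul G Omega dist); auto.
  - apply (equiv_inv G Omega dist); auto.
Qed.

Lemma uc_all G Omega dist Phi S' x : @is_action Omega dist G Phi ->
  @symmetric_set G S' -> (forall s, In s S' -> unif_continuous dist (Phi s)) ->
  gen_sub G (fun y => In y S') x ->
  unif_continuous dist (Phi x) /\ unif_continuous dist (Phi (ginv x)).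
Proof.
  intros HA Hsym HS Hx.
  assert (Hone : unif_continuous dist (Phi gone)).
  { intros e He. exists e. split; auto. intros u v H.
    destruct HA as [_ [H1 _]]. rewrite !H1. auto. }
  assert (Hmul : forall a b, unif_continuous dist (Phi a) -> unif_continuous dist (Phi b) ->
     unif_continuous dist (Phi (gmul a b))).
  { intros a b Ua Ub e He. destruct (Ua e He) as [d1 [Hd1 H1]].
    destruct (Ub d1 Hd1) as [d2 [Hd2 H2]]. exists d2. split; auto.
    intros u v H. destruct HA as [_ [_ HM]]. rewrite !HM. auto. }
  induction Hx.
  - split; auto; try (apply HS, Hsym; auto).
  - rewrite g_inv_one. auto.
  - destruct IHHx1, IHHx2. split; auto. rewrite g_inv_mul. auto.
  - rewrite g_inv_inv. tauto.
Qed.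

Definition Good (G : Group) (Omega : Type) (dist : Omega -> Omega -> R) (S : list G)
  (Phi : G -> Omega -> Omega) (a : G) : Prop :=
  forall eta, 0 < eta -> exists delta d, 0 < delta /\ 0 < d /\
    forall y, pseudotrajectory dist G S Phi d y -> forall u w,
      dist u (y w) < delta -> dist (Phi a u) (y (gmul a w)) < eta.

Lemma pseudo_mono G Omega dist S Phi d d' y : d' <= d ->
  @pseudotrajectory Omega dist G S Phi d' y -> pseudotrajectory dist G S Phi d y.
Proof. intros Hd H s g Hs. specialize (H s g Hs). lra. Qed.

Lemma good_all G Omega dist Phi S x : is_metric dist -> @is_action Omega dist G Phi ->
  @symmetric_set G S -> (forall a, unif_continuous dist (Phi a)) ->
  gen_sub G (fun y => In y S) x ->
  Good G Omega dist S Phi x /\ Good G Omega dist S Phi (ginv x).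
Proof.
  intros HM HA Hsym UC Hx.
  destruct HM as [_ [_ [Hsy Htr]]].
  assert (Hone : Good G Omega dist S Phi gone).
  { intros e He. exists e, 1. split; auto. split; [lra|]. intros y _ u w H.
    destruct HA as [_ [H1 _]]. rewrite H1, gmul_1l. auto. }
  assert (Hgen : forall s, In s S -> Good G Omega dist S Phi s).
  { intros s Hs e He. destruct (UC s (e/2)) as [d1 [Hd1 H1]]; [lra|].
    exists d1, (e/2). split; auto. split; [lra|]. intros y Hy u w H.
    specialize (H1 _ _ H). specialize (Hy s w Hs). rewrite Hsy in Hy.
    specialize (Htr (Phi s u) (Phi s (y w)) (y (gmul s w))). lra. }
  assert (Hmul : forall a b, Good G Omega dist S Phi a -> Good G Omega dist S Phi b ->
     Good G Omega dist S Phi (gmul a b)).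
  { intros a b Ga Gb e He. destruct (Ga e He) as [da [ka [Hda [Hka Ha]]]].
    destruct (Gb da Hda) as [db [kb [Hdb [Hkb Hb]]]].
    exists db, (Rmin ka kb). split; auto. split. apply Rmin_pos; auto.
    intros y Hy u w H.
    assert (Hya : pseudotrajectory dist G S Phi ka y) by (eapply pseudo_mono; [apply Rmin_l|eauto]).
    assert (Hyb : pseudotrajectory dist G S Phi kb y) by (eapply pseudo_mono; [apply Rmin_r|eauto]).
    destruct HA as [_ [_ HM2]]. rewrite HM2, <- gmul_assoc. apply Ha; auto. }
  induction Hx.
  - split; auto; try (apply Hgen, Hsym; auto).
  - rewrite g_inv_one. auto.
  - destruct IHHx1, IHHx2. split; auto. rewrite g_inv_mul. auto.
  - rewrite g_inv_inv. tauto.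
Qed.

Lemma good_list (G : Group) (Omega : Type) dist Phi S (L : list G) :
  (forall a, In a L -> Good G Omega dist S Phi a) ->
  forall eta, 0 < eta -> exists delta d, 0 < delta /\ 0 < d /\
    forall y, pseudotrajectory dist G S Phi d y -> forall a, In a L -> forall u w,
      dist u (y w) < delta -> dist (Phi a u) (y (gmul a w)) < eta.
Proof.
  induction L as [|a L IH]; intros HL e He.
  - exists 1, 1. split; [lra|]. split; [lra|]. intros y _ a [].
  - destruct (HL a (or_introl eq_refl) e He) as [da [ka [Hda [Hka Ha]]]].
    destruct (IH (fun b Hb => HL b (or_intror Hb)) e He) as [db [kb [Hdb [Hkb Hb]]]].
    exists (Rmin da db), (Rmin ka kb). split. apply Rmin_pos; auto.
    split. apply Rmin_pos; auto.
    intros y Hy b [<-|Hin] u w H.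
    + apply Ha. eapply pseudo_mono; [apply Rmin_l|eauto].
      eapply Rlt_le_trans; [eauto|apply Rmin_l].
    + apply Hb; auto. eapply pseudo_mono; [apply Rmin_r|eauto].
      eapply Rlt_le_trans; [eauto|apply Rmin_r].
Qed.

Lemma id1 (G : Group) (c g h : G) :
  gmul c (gmul g h) = gmul (comm G c g) (gmul g (gmul c h)).
Proof. unfold comm. repeat rewrite <- gmul_assoc. rewrite !g_cancel_l. reflexivity. Qed.

Lemma id2 (G : Group) (c g : G) :
  gmul (ginv c) (gmul (comm G c g) g) = gmul g (ginv c).
Proof. unfold comm. repeat rewrite <- gmul_assoc. rewrite gmul_Vl, gmul_1r, g_cancel_l. reflexivity. Qed.

Theorem lemma2 (G : Group) (Omega : Type) (dist : Omega -> Omega -> R)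
  (Phi : G -> Omega -> Omega) (U V : Omega -> Prop) (S : list G) :
  is_metric dist ->
  nilpotent G ->
  finitely_generated G ->
  @symmetric_set G S -> @generates G S ->
  @is_action Omega dist G Phi ->
  @unif_continuous_action Omega dist G Phi ->
  (exists g : G, @homeo_topologically_Anosov Omega dist G Phi g U V) ->
  @topologically_Anosov Omega dist G S Phi U V.
Proof.
  intros HM Hnil _ Hsym Hgen HA HUC [g Hg].
  destruct Hg as [[gam [Hgam Hball]] [Hsh [Del [HDel Hexp]]]].
  assert (HM' := HM). destruct HM' as [Hpos [Hzero [Hsy Htr]]].
  assert (HA' := HA). destruct HA' as [_ [HA1 HA2]].
  assert (UCall : forall a, unif_continuous dist (Phi a)).
  { destruct HUC as [S' [HS'sym [HS'gen HS'uc]]]. intro a.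
    apply (uc_all G Omega dist Phi S' a HA HS'sym HS'uc (HS'gen a)). }
  assert (Goodall : forall a, Good G Omega dist S Phi a).
  { intro a. apply (good_all G Omega dist Phi S a HM HA Hsym UCall (Hgen a)). }
  split; [exists gam; split; auto|].
  split.
  2:{ exists Del. split; auto. }
  intros eps Heps.
  destruct Hnil as [n Hn].
  set (tch := fun s i => Nat.iter i (fun t => comm G t g) s).
  assert (Hlcs : forall s i, lcs G i (tch s i)).
  { intros s i. induction i; simpl; auto. apply gs_in. exists (tch s i), g. split; auto. }
  set (T := flat_map (fun s => map (fun i => ginv (tch s i)) (seq 0 (Datatypes.S n))) S).
  set (rho := Rmin gam (Del/2)).
  assert (Hrho : 0 < rho) by (apply Rmin_pos; lra).
  assert (Hrg : rho <= gam) by apply Rmin_l.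
  assert (Hrd : rho <= Del/2) by apply Rmin_r.
  destruct (good_list G Omega dist Phi S T (fun a _ => Goodall a) rho Hrho)
    as [dT [kT [HdT [HkT HT]]]].
  set (eps1 := Rmin eps (Rmin rho dT)).
  assert (He1 : 0 < eps1) by (repeat apply Rmin_pos; lra).
  assert (He1a : eps1 <= eps) by apply Rmin_l.
  assert (He1b : eps1 <= rho) by (eapply Rle_trans; [apply Rmin_r|apply Rmin_l]).
  assert (He1c : eps1 <= dT) by (eapply Rle_trans; [apply Rmin_r|apply Rmin_r]).
  destruct (Hsh eps1 He1) as [dZ [HdZ HZ]].
  destruct (good_list G Omega dist Phi S [g; ginv g] (fun a _ => Goodall a) dZ HdZ)
    as [dg [kg [Hdg [Hkg Hgg]]]].
  exists (Rmin kT kg). split; [apply Rmin_pos; auto|].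
  intros y Hy HV.
  assert (HyT : pseudotrajectory dist G S Phi kT y) by (eapply pseudo_mono; [apply Rmin_l|eauto]).
  assert (Hyg : pseudotrajectory dist G S Phi kg y) by (eapply pseudo_mono; [apply Rmin_r|eauto]).
  assert (Hd0 : forall u, dist u u = 0) by (intro u; apply Hzero; reflexivity).
  assert (shadow : forall h, exists x, forall k : Z,
     dist (y (gmul (gpow G g k) h)) (Phi (gpow G g k) x) < eps1).
  { intro h. apply (HZ (fun k => y (gmul (gpow G g k) h))).
    - intros s k Hs. simpl in Hs. destruct Hs as [<-|[<-|[]]]; cbv beta.
      + change (@gmul Zgroup 1%Z k) with (1 + k)%Z. replace (1 + k)%Z with (Z.succ k) by lia. rewrite gpow_succ.
        change (gpow G g 1) with (gmul g gone). rewrite gmul_1r, Hsy, <- gmul_assoc.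
        apply (Hgg y Hyg g (or_introl eq_refl)). rewrite Hd0. auto.
      + change (@gmul Zgroup (-1)%Z k) with (-1 + k)%Z. replace (-1 + k)%Z with (Z.pred k) by lia. rewrite gpow_pred.
        change (gpow G g (-1)) with (ginv (gmul g gone)). rewrite gmul_1r, Hsy, <- gmul_assoc.
        apply (Hgg y Hyg (ginv g) (or_intror (or_introl eq_refl))). rewrite Hd0. auto.
    - intro k. apply HV. }
  set (x := fun h => proj1_sig (constructive_indefinite_description _ (shadow h))).
  assert (Hx : forall h (k : Z), dist (y (gmul (gpow G g k) h)) (Phi (gpow G g k) (x h)) < eps1).
  { intro h. exact (proj2_sig (constructive_indefinite_description _ (shadow h))). }
  assert (uniq : forall h u w,
     (forall k, dist (y (gmul (gpow G g k) h)) (Phi (gpow G g k) u) < rho) ->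
     (forall k, dist (y (gmul (gpow G g k) h)) (Phi (gpow G g k) w) < rho) -> u = w).
  { intros h u w Hu Hw.
    assert (Uk : forall p k, (forall k, dist (y (gmul (gpow G g k) h)) (Phi (gpow G g k) p) < rho) ->
                 U (Phi (gpow G g k) p)).
    { intros p k Hp. apply (Hball (y (gmul (gpow G g k) h))); auto. specialize (Hp k). lra. }
    apply (Hexp u w).
    - rewrite <- (HA1 u). apply (Uk u 0%Z Hu).
    - rewrite <- (HA1 w). apply (Uk w 0%Z Hw).
    - intro k. cbn beta. split; [apply Uk; auto|]. split; [apply Uk; auto|].
      specialize (Hu k). specialize (Hw k). rewrite Hsy in Hu.
      specialize (Htr (Phi (gpow G g k) u) (y (gmul (gpow G g k) h)) (Phi (gpow G g k) w)).
      lra. }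
  assert (Hshift : Equiv G Omega Phi x g).
  { intro h. apply (uniq (gmul g h)).
    - intro k. specialize (Hx (gmul g h) k). lra.
    - intro k. rewrite <- HA2, gmul_assoc, gpow_comm, <- gpow_succ.
      specialize (Hx h (Z.succ k)). lra. }
  assert (step : forall c, In (ginv c) T -> Equiv G Omega Phi x (comm G c g) ->
                 Equiv G Omega Phi x c).
  { intros c HcT Hcm h.
    set (z := fun h => Phi (ginv c) (x (gmul c h))).
    assert (Hz : Equiv G Omega Phi z g).
    { intro h'. unfold z. rewrite id1, Hcm, Hshift, <- !HA2, <- gmul_assoc, id2. reflexivity. }
    assert (Ez : z h = x h).
    { apply (uniq h).
      - intro k. rewrite <- (equiv_gpow G Omega dist Phi z g k HA Hz h). unfold z.
        set (w := gmul c (gmul (gpow G g k) h)).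
        rewrite <- (g_cancel_l G c (gmul (gpow G g k) h)) at 1. fold w.
        rewrite Hsy. apply (HT y HyT (ginv c) HcT (x w) w).
        specialize (Hx w 0%Z). simpl in Hx. rewrite gmul_1l, HA1, Hsy in Hx. lra.
      - intro k. specialize (Hx h k). lra. }
    unfold z in Ez. rewrite <- Ez. rewrite <- (g_inv_inv G c) at 2.
    rewrite (act_inv_l G Omega dist Phi HA). reflexivity. }
  assert (chain : forall s, In s S -> forall j, (j <= n)%nat -> Equiv G Omega Phi x (tch s (n - j)%nat)).
  { intros s Hs j. induction j as [|j IHj]; intro Hj.
    - rewrite Nat.sub_0_r, (Hn _ (Hlcs s n)). apply (equiv_one G Omega dist); auto.
    - apply step.
      + unfold T. apply in_flat_map. exists s. split; auto. apply in_map_iff.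
        exists (n - Datatypes.S j)%nat. split; auto. apply in_seq. lia.
      + replace (n - j)%nat with (Datatypes.S (n - Datatypes.S j))%nat in IHj by lia. apply IHj. lia. }
  assert (HxS : forall s, In s S -> Equiv G Omega Phi x s).
  { intros s Hs. specialize (chain s Hs n (le_n n)). rewrite Nat.sub_diag in chain. exact chain. }
  assert (Hxall : forall a, Equiv G Omega Phi x a).
  { intro a. apply (equiv_gen G Omega dist Phi x (fun s => In s S) a HA HxS (Hgen a)). }
  exists (x gone). intro h. rewrite <- (Hxall h gone), gmul_1r.
  specialize (Hx h 0%Z). simpl in Hx. rewrite gmul_1l, HA1 in Hx. lra.
Qed.
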